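(* Let $T$ be a tabloid whose $k$-th and $(k+1)$-st rows have the same size $m$. Then $\operatorname{lch}^o_k(T)=\operatorname{lch}_k(T)$ for every activation ordering $o$.
   Context: Fix $n\ge1$; $\overline i=i+n\mathbb Z$, $[\overline n]=\{\overline1,\dots,\overline n\}$. A tabloid is a sequence of pairwise disjoint subsets (rows) $T_1,T_2,\dots$ of $[\overline n]$. Broken order: $\overline1<\overline2<\dots<\overline n$. An activation ordering for rows $k,k+1$ is a bijection $o:[m]\to T_k$. The charge matching with ordering $o$: for $t=1,\dots,m$ in turn, match $o(t)$ with the smallest (broken order) not yet matched element of $T_{k+1}$ that is larger than $o(t)$, if one exists; otherwise with the smallest not yet matched element of $T_{k+1}$. $\operatorname{lch}^o_k(T)$ is the number of elements $\overline a\in T_k$ matched with some $\overline b$ satisfying $\overline a>\overline b$ (broken order). $\operatorname{lch}_k(T)$ denotes $\operatorname{lch}^{o}_k(T)$ for the standard ordering $o$, which lists $T_k$ in increasing broken order. *)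

(* Defs.v *)
From mathcomp Require Import all_boot.
Set Implicit Arguments. Unset Strict Implicit. Unset Printing Implicit Defensive.

(* Convention: [n-bar] = {1-bar,...,n-bar} is represented by 'I_n, the residue
   i-bar (1 <= i <= n) being the ordinal i-1.  The broken order
   1-bar < 2-bar < ... < n-bar is then the usual order on 'I_n.
   A tabloid is a (finite) sequence of rows T_1, T_2, ... ; row T_(j+1) is
   [row T j] (0-based indexing in the seq; rows beyond the end are empty). *)

Definition row n (T : seq {set 'I_n}) (j : nat) : {set 'I_n} := nth set0 T j.

Definition is_tabloid n (T : seq {set 'I_n}) : Prop :=
  forall i j, i != j -> [disjoint row T i & row T j].

Definition sorted_enum n (A : {set 'I_n}) : seq 'I_n :=
  sort (fun x y : 'I_n => x <= y) (enum A).

Definition partner n (a : 'I_n) (U : seq 'I_n) (u0 : 'I_n) : 'I_n :=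
  if has (fun b : 'I_n => a < b) U
  then nth u0 U (find (fun b : 'I_n => a < b) U)
  else head u0 U.

(* Processes the activated elements in order; U = sorted list of unmatched
   elements of the next row.  Counts the elements a matched with some b < a. *)
Fixpoint lch_run n (As : seq 'I_n) (U : seq 'I_n) : nat :=
  match As with
  | [::] => 0
  | a :: r =>
      match U with
      | [::] => 0
      | u0 :: _ =>
          let b := partner a U u0 in
          (b < a) + lch_run r (rem b U)
      end
  end.

(* lch^o_k(T) for an activation ordering o : 'I_m -> T_k (k is 0-based here:
   rows [row T k] and [row T k.+1]). *)
Definition lch_o n (T : seq {set 'I_n}) (k m : nat) (o : 'I_m -> 'I_n) : nat :=
  lch_run [seq o t | t <- enum 'I_m] (sorted_enum (row T k.+1)).

Definition lch n (T : seq {set 'I_n}) (k : nat) : nat :=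
  lch_run (sorted_enum (row T k)) (sorted_enum (row T k.+1)).

(* Main.v *)
Require Import Defs.
From mathcomp Require Import all_boot.
From Stdlib Require Import Lia.
Set Implicit Arguments. Unset Strict Implicit. Unset Printing Implicit Defensive.

Definition cyc (a x p : nat) : Prop :=
  ((a < p)%coq_nat /\ (a < x)%coq_nat /\ (x < p)%coq_nat) \/
  ((p < a)%coq_nat /\ ((a < x)%coq_nat \/ (x < p)%coq_nat)).

Ltac conv := repeat match goal with
 | H : is_true (~~ (_ < _)) |- _ => rewrite -leqNgt in H
 | H : is_true (~~ (_ <= _)) |- _ => rewrite -ltnNge in H
 | H : is_true (_ < _) |- _ => move/ltP: H => H
 | H : is_true (_ <= _) |- _ => move/leP: H => H
 | H : is_true (_ != _) |- _ => move/eqP: H => H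
 | H : (_ < _) = false |- _ => move/negbT: H => H
 | H : (_ <= _) = false |- _ => move/negbT: H => H
 end.
Ltac nlia := intros; conv; try (apply/leP); lia.

Definition nxt n (a : 'I_n) (U : seq 'I_n) : 'I_n := partner a U a.

Lemma partner_nxt n (a u0 : 'I_n) U : U != [::] -> partner a U u0 = nxt a U.
Proof.
rewrite /nxt /partner; case: ifP => hh hU.
  by apply: set_nth_default; rewrite -has_find.
by case: U hU hh.
Qed.

Lemma partner_spec n (a : 'I_n) U :
  sorted (fun x y : 'I_n => x <= y) U -> a \notin U -> U != [::] ->
  nxt a U \in U /\ forall x, x \in U -> ~ cyc a x (nxt a U).
Proof.
move=> hs ha hU; rewrite /nxt /partner; case: ifP => hh.
  set i := find _ U.
  have hi : i < size U by rewrite -has_find.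
  have hp : a < nth a U i := nth_find a hh.
  split; first exact: mem_nth.
  move=> x hx hc.
  have hj : index x U < size U by rewrite index_mem.
  have ex : nth a U (index x U) = x by rewrite nth_index.
  case: (ltnP (index x U) i) => hij.
    have := before_find a hij; rewrite ex => hx'.
    move: hc; rewrite /cyc; move: hx'; nlia.
  have := sorted_leq_nth (fun y x z : 'I_n => @leq_trans y x z) (fun x : 'I_n => leqnn x) a hs i (index x U) hi hj hij.
  rewrite ex => /= hle.
  move: hc; rewrite /cyc; nlia.
case: U hs ha hU hh => [//|u U'] /= hs ha _ hh.
have hall : all (fun y : 'I_n => u <= y) U'.
  exact: (order_path_min (fun y x z : 'I_n => @leq_trans y x z) hs).
split; first by rewrite inE eqxx.
have hna : u != a by apply: contra ha => /eqP ->; rewrite inE eqxx.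
have hua : ~~ (a < u) by move: hh => /negP /negP; rewrite negb_or => /andP [].
move=> x; rewrite inE => /orP [/eqP -> | hx] hc.
  move: hc hna hua; rewrite /cyc -(inj_eq val_inj) /=; nlia.
have h1 : u <= x := allP hall x hx.
have h2 : ~~ (a < x).
  by move/negbT: hh; rewrite negb_or => /andP [_ /hasPn /(_ x hx)].
have h3 : x != a by apply: contra ha => /eqP <-; rewrite inE hx orbT.
move: hc hna hua h1 h2 h3; rewrite /cyc -!(inj_eq val_inj) /=; nlia.
Qed.

Definition Sp n (a : 'I_n) (U : seq 'I_n) (p : 'I_n) := p \in U /\ forall x, x \in U -> ~ cyc a x p.

Lemma spec_uniq n (a : 'I_n) U p q : Sp a U p -> Sp a U q -> a \notin U -> p = q.
Proof.
move=> [hp1 hp2] [hq1 hq2] ha; apply: val_inj.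
have hap : a != p by apply: contra ha => /eqP ->.
have haq : a != q by apply: contra ha => /eqP ->.
have := hp2 q hq1; have := hq2 p hp1; move: hap haq; rewrite /cyc -!(inj_eq val_inj) /=; nlia.
Qed.

Lemma run_cons n (a : 'I_n) r V : V != [::] ->
  lch_run (a :: r) V = (nxt a V < a) + lch_run r (rem (nxt a V) V).
Proof. by case: V => //= u V' _; rewrite partner_nxt. Qed.

Definition Inv n (U : seq 'I_n) := sorted (fun x y : 'I_n => x <= y) U && uniq U.

Lemma Inv_rem n (U : seq 'I_n) b : Inv U -> Inv (rem b U).
Proof.
case/andP=> hs hu; rewrite /Inv rem_uniq // andbT rem_filter //.
apply: sorted_filter => //; exact: (fun y x z : 'I_n => @leq_trans y x z).
Qed.

Lemma spec_sub n (a : 'I_n) U V p : {subset V <= U} -> p \in V -> Sp a U p -> Sp a V p.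
Proof. by move=> hVU hp [_ h]; split=> // x /hVU; apply: h. Qed.

Lemma nxt_spec n (a : 'I_n) U : Inv U -> a \notin U -> U != [::] -> Sp a U (nxt a U).
Proof. by case/andP=> hs _ ha hU; apply: partner_spec. Qed.

Lemma swap2 n (a a' : 'I_n) r U : Inv U -> a \notin U -> a' \notin U -> 1 < size U ->
  lch_run [:: a, a' & r] U = lch_run [:: a', a & r] U.
Proof.
move=> hI ha ha' hsz.
have hU : U != [::] by rewrite -size_eq0; case: (size U) hsz.
have [hb1 hb2] := nxt_spec hI ha hU.
have [hb1' hb2'] := nxt_spec hI ha' hU.
set b := nxt a U in hb1 hb2 *; set b' := nxt a' U in hb1' hb2' *.
have hu : uniq U by case/andP: hI.
have hV : forall c, c \in U -> rem c U != [::].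
  by move=> c hc; rewrite -size_eq0 size_rem //; case: (size U) hsz => [|[]].
have hmem : forall c x, x \in rem c U = (x != c) && (x \in U).
  by move=> c x; rewrite mem_rem_uniq // inE.
have hsubr : forall c, {subset rem c U <= U} by move=> c x; rewrite hmem => /andP [].
have hnr : forall c (y : 'I_n), y \notin U -> y \notin rem c U.
  by move=> c y hy; apply: contra hy => /hsubr.
rewrite (run_cons _ _ hU) (run_cons a' _ hU) -/b -/b'.
rewrite (run_cons _ _ (hV b hb1)) (run_cons _ _ (hV b' hb1')).
case: (eqVneq b b') => hbb.
-
  rewrite -hbb.
  have [hc1 hc2] := nxt_spec (Inv_rem b hI) (hnr b a' ha') (hV b hb1).
  have [hc1' hc2'] := nxt_spec (Inv_rem b hI) (hnr b a ha) (hV b hb1).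
  set c := nxt a' (rem b U) in hc1 hc2 *; set c' := nxt a (rem b U) in hc1' hc2' *.
  move: (hc1) (hc1'); rewrite !hmem => /andP [hcb hcU] /andP [hcb' hcU'].
  have hab : a != b by apply: contra ha => /eqP ->.
  have hab' : a' != b by apply: contra ha' => /eqP ->.
  have hac : a != c by apply: contra ha => /eqP ->.
  have hac' : a' != c by apply: contra ha' => /eqP ->.
  have hcc' : c = c'.
    apply: val_inj.
    have := hb2 c hcU; have := hb2 c' hcU'; have := hb2' c hcU; have := hb2' c' hcU'.
    rewrite -hbb.
    have := hc2 c' hc1'; have := hc2' c hc1.
    have hac2 : a != c' by apply: contra ha => /eqP ->.
    have hac2' : a' != c' by apply: contra ha' => /eqP ->.
    move: hab hab' hac hac' hac2 hac2' hcb hcb'.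
    rewrite /cyc -!(inj_eq val_inj) /=; nlia.
  rewrite -hcc'.
  have := hb2 c hcU; have := hb2' c hcU; rewrite -hbb.
  move: hab hab' hac hac' hcb; rewrite /cyc -!(inj_eq val_inj) /=.
  move=> h1 h2 h3 h4 h5 h6 h7.
  rewrite !addnA; congr (_ + _).
  case: (ltnP b a) => w1; case: (ltnP c a') => w2; case: (ltnP b a') => w3;
    case: (ltnP c a) => w4 => //; exfalso; nlia.
- have hb'r : b' \in rem b U by rewrite hmem eq_sym hbb.
  have hbr : b \in rem b' U by rewrite hmem hbb.
  have e1 : nxt a' (rem b U) = b'.
    apply: (spec_uniq (nxt_spec (Inv_rem b hI) (hnr b a' ha') (hV b hb1))) => //.
      exact: (spec_sub (hsubr b)).
    exact: hnr.
  have e2 : nxt a (rem b' U) = b.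
    apply: (spec_uniq (nxt_spec (Inv_rem b' hI) (hnr b' a ha) (hV b' hb1'))) => //.
      exact: (spec_sub (hsubr b')).
    exact: hnr.
  rewrite e1 e2 !addnA [(b' < a') + _]addnC; congr (_ + _).
  rewrite [rem b' (rem b U)]rem_filter ?rem_uniq // [rem b (rem b' U)]rem_filter ?rem_uniq //.
  rewrite !rem_filter // -!filter_predI; congr lch_run; apply: eq_filter => x /=.
  by rewrite andbC.
Qed.

Lemma move_front n (a : 'I_n) B1 B2 U : Inv U ->
  all (fun y => y \notin U) (B1 ++ a :: B2) -> size (B1 ++ a :: B2) <= size U ->
  lch_run (B1 ++ a :: B2) U = lch_run (a :: B1 ++ B2) U.
Proof.
elim: B1 U => [//|x B1 IH] U hI hall hsz.
have hU : U != [::] by rewrite -size_eq0; move: hsz => /=; case: (size U).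
case/andP: (hall) => hx hall'.
have [hb1 _] := nxt_spec hI hx hU.
rewrite (run_cons x _ hU) IH //.
- rewrite -(run_cons _ _ hU) swap2 //.
    by apply: (allP hall'); rewrite mem_cat inE eqxx orbT.
  move: hsz; rewrite /= size_cat /= -plusE => hsz; nlia.
- exact: Inv_rem.
- apply/allP => y hy; have := allP hall' y hy; apply: contra.
  by case/andP: hI => _ hu; rewrite mem_rem_uniq // inE => /andP [].
- by rewrite size_rem //; move: hsz => /=; nlia.
Qed.

Lemma run_perm n (As Bs : seq 'I_n) U : perm_eq As Bs -> Inv U ->
  all (fun y => y \notin U) As -> size As <= size U ->
  lch_run As U = lch_run Bs U.
Proof.
elim: As Bs U => [|a As IH] Bs U hp hI hall hsz.
  by move: (perm_size hp); case: Bs {hp}.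
have hin : a \in Bs by rewrite -(perm_mem hp) inE eqxx.
case/splitPr: hin hp => B1 B2 hp.
have hallB : all (fun y => y \notin U) (B1 ++ a :: B2) by rewrite -(perm_all _ hp).
rewrite move_front //; last by rewrite -(perm_size hp).
have hU : U != [::] by rewrite -size_eq0; move: hsz => /=; case: (size U).
case/andP: (hall) => hx hall'.
have [hb1 _] := nxt_spec hI hx hU.
rewrite !(run_cons _ _ hU); congr (_ + _); apply: IH.
- rewrite -(perm_cons a); apply: (perm_trans hp).
  by apply/permP => q; rewrite /= !count_cat /= addnCA.
- exact: Inv_rem.
- apply/allP => y hy; have := allP hall' y hy; apply: contra.
  by case/andP: hI => _ hu; rewrite mem_rem_uniq // inE => /andP [].
- by rewrite size_rem //; move: hsz => /=; nlia.
Qed.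

Theorem lemma5p5 (n : nat) (T : seq {set 'I_n}) (k m : nat) :
  0 < n -> is_tabloid T ->
  #|row T k| = m -> #|row T k.+1| = m ->
  forall o : 'I_m -> 'I_n,
    injective o -> [set o t | t : 'I_m] = row T k ->
    lch_o T k o = lch T k.
Proof.
move=> _ hT hA hB o hinj hset.
have hdis := hT k k.+1 (negbT (ltn_eqF (ltnSn k))).
have memA : forall x, (x \in [seq o t | t <- enum 'I_m]) = (x \in row T k).
  move=> x; rewrite -hset; apply/mapP/imsetP => [[t _ ->]|[t _ ->]]; exists t => //.
  by rewrite mem_enum.
rewrite /lch_o /lch; apply: run_perm.
- apply: uniq_perm.
  + by rewrite map_inj_uniq // enum_uniq.
  + by rewrite sort_uniq enum_uniq.
  + by move=> x; rewrite memA mem_sort mem_enum.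
- rewrite /Inv sort_uniq enum_uniq andbT.
  by apply: sort_sorted => x y; exact: leq_total.
- apply/allP => x; rewrite memA => hx.
  rewrite mem_sort mem_enum.
  by rewrite (disjointFr hdis hx).
- by rewrite size_map size_enum_ord size_sort -cardE hB.
Qed.
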